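(* Let $\mathcal D$ be a strongly first-order class of dependency notions. Then every sentence of $\mathbf{FO}(\mathcal D,\sqcup)$ is equivalent to some first-order sentence, i.e. for every sentence $\phi$ of $\mathbf{FO}(\mathcal D,\sqcup)$ there is a first-order sentence $\phi'$ with $\mathfrak M\models_{\{\emptyset\}}\phi\iff\mathfrak M\models\phi'$ for all structures $\mathfrak M$.
   Context: Team semantics (lax version). For a structure $\mathfrak M$ with domain $M$, a team $X$ is a (possibly empty) set of assignments $s:V\to M$, $V$ a finite set of variables; $X(\vec v)=\{s(\vec v):s\in X\}$. Satisfaction for formulas in negation normal form: first-order literal $\alpha$: every $s\in X$ satisfies $\alpha$ (Tarski); $\psi\vee\theta$: $X=Y\cup Z$ with $\mathfrak M\models_Y\psi$, $\mathfrak M\models_Z\theta$; $\psi\wedge\theta$: both; $\exists v\psi$: some $F:X\to\mathcal P(M)\setminus\{\emptyset\}$ with $\mathfrak M\models_{X[F/v]}\psi$, $X[F/v]=\{s[m/v]:s\in X,m\in F(s)\}$; $\forall v\psi$: $\mathfrak M\models_{X[M/v]}\psi$, $X[M/v]=\{s[m/v]:s\in X,m\in M\}$. A $k$-ary dependency notion $\mathbf D$ is an isomorphism-closed class of structures $(M,R)$, $R$ $k$-ary; $\mathfrak M\models_X\mathbf D\vec v$ iff $(M,X(\vec v))\in\mathbf D$. A class $\mathcal D$ is strongly first-order if every sentence $\phi$ of $\mathbf{FO}(\mathcal D)$ has a first-order sentence $\phi'$ with $\mathfrak M\models_{\{\emptyset\}}\phi\iff\mathfrak M\models\phi'$ for all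 $\mathfrak M$. Classical disjunction: $\mathfrak M\models_X\phi\sqcup\psi$ iff $\mathfrak M\models_X\phi$ or $\mathfrak M\models_X\psi$. *)

(* Defs.v *)
From Stdlib Require Import List.
Import ListNotations.

(* Relational vocabulary (with equality); relation symbols are interpreted
   as predicates on tuples (lists). *)
Record signature : Type := { rel_sym : Type }.

Record structure (L : signature) : Type := {
  dom :> Type;
  dom_inhabited : inhabited dom;
  interp : rel_sym L -> list dom -> Prop }.
Arguments dom {L}.
Arguments interp {L}.

(* A k-ary dependency notion: an isomorphism-closed class of structures
   (M, R) with R a k-ary relation on M (tuples represented as lists). *)
Record dep_notion (k : nat) : Type := {
  dn_holds : forall M : Type, (list M -> Prop) -> Prop;
  dn_kary : forall (M : Type) (R : list M -> Prop),
      dn_holds M R -> forall t, R t -> length t = k;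
  dn_iso : forall (M N : Type) (f : M -> N) (g : N -> M),
      (forall x, g (f x) = x) -> (forall y, f (g y) = y) ->
      forall R : list M -> Prop,
        dn_holds M R <-> dn_holds N (fun t => exists u, R u /\ map f u = t) }.
Arguments dn_holds {k}.

Record dep_class : Type := {
  dc_idx : Type;
  dc_arity : dc_idx -> nat;
  dc_notion : forall i : dc_idx, dep_notion (dc_arity i) }.

(* Formulas of FO(D, ⊔) in negation normal form; variables are nats. *)
Inductive formula (L : signature) (C : dep_class) : Type :=
| FEq  : nat -> nat -> formula L C
| FNeq : nat -> nat -> formula L C
| FRel : rel_sym L -> list nat -> formula L C
| FNRel : rel_sym L -> list nat -> formula L C
| FDep : dc_idx C -> list nat -> formula L C
| FAnd : formula L C -> formula L C -> formula L C
| FOr  : formula L C -> formula L C -> formula L C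
| FCor : formula L C -> formula L C -> formula L C
| FEx  : nat -> formula L C -> formula L C
| FAll : nat -> formula L C -> formula L C.
Arguments FEq {L C}. Arguments FNeq {L C}. Arguments FRel {L C}.
Arguments FNRel {L C}. Arguments FDep {L C}. Arguments FAnd {L C}.
Arguments FOr {L C}. Arguments FCor {L C}. Arguments FEx {L C}.
Arguments FAll {L C}.

Inductive fo (L : signature) : Type :=
| OEq  : nat -> nat -> fo L
| ONeq : nat -> nat -> fo L
| ORel : rel_sym L -> list nat -> fo L
| ONRel : rel_sym L -> list nat -> fo L
| OAnd : fo L -> fo L -> fo L
| OOr  : fo L -> fo L -> fo L
| OEx  : nat -> fo L -> fo L
| OAll : nat -> fo L -> fo L.
Arguments OEq {L}. Arguments ONeq {L}. Arguments ORel {L}. Arguments ONRel {L}.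
Arguments OAnd {L}. Arguments OOr {L}. Arguments OEx {L}. Arguments OAll {L}.

Fixpoint fv {L C} (φ : formula L C) : list nat :=
  match φ with
  | FEq x y | FNeq x y => [x; y]
  | FRel _ xs | FNRel _ xs | FDep _ xs => xs
  | FAnd a b | FOr a b | FCor a b => fv a ++ fv b
  | FEx v a | FAll v a => filter (fun x => negb (Nat.eqb x v)) (fv a)
  end.

Fixpoint fo_fv {L} (φ : fo L) : list nat :=
  match φ with
  | OEq x y | ONeq x y => [x; y]
  | ORel _ xs | ONRel _ xs => xs
  | OAnd a b | OOr a b => fo_fv a ++ fo_fv b
  | OEx v a | OAll v a => filter (fun x => negb (Nat.eqb x v)) (fo_fv a)
  end.

Fixpoint dep_wf {L C} (φ : formula L C) : Prop :=
  match φ with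
  | FDep i xs => length xs = dc_arity C i
  | FAnd a b | FOr a b | FCor a b => dep_wf a /\ dep_wf b
  | FEx _ a | FAll _ a => dep_wf a
  | _ => True
  end.

Fixpoint no_cor {L C} (φ : formula L C) : Prop :=
  match φ with
  | FCor _ _ => False
  | FAnd a b | FOr a b => no_cor a /\ no_cor b
  | FEx _ a | FAll _ a => no_cor a
  | _ => True
  end.

Definition sentence {L C} (φ : formula L C) : Prop := fv φ = [] /\ dep_wf φ.
Definition fo_sentence {L} (φ : fo L) : Prop := fo_fv φ = [].

(* Assignments: partial maps with (finite) domain; teams: sets of assignments. *)
Definition assignment (M : Type) := nat -> option M.
Definition team (M : Type) := assignment M -> Prop.

Definition update {M} (s : assignment M) (v : nat) (m : M) : assignment M :=
  fun n => if Nat.eqb n v then Some m else s n.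

Fixpoint vals {M} (s : assignment M) (xs : list nat) : option (list M) :=
  match xs with
  | [] => Some []
  | x :: xs' =>
      match s x, vals s xs' with
      | Some a, Some t => Some (a :: t)
      | _, _ => None
      end
  end.

Definition team_rel {M} (X : team M) (xs : list nat) : list M -> Prop :=
  fun t => exists s, X s /\ vals s xs = Some t.

Definition empty_team (M : Type) : team M := fun s => forall n, s n = None.
Definition empty_asg (M : Type) : assignment M := fun _ => None.

Fixpoint fo_sat {L} (M : structure L) (s : assignment M) (φ : fo L) : Prop :=
  match φ with
  | OEq x y => exists a, s x = Some a /\ s y = Some a
  | ONeq x y => exists a b, s x = Some a /\ s y = Some b /\ a <> b
  | ORel r xs => exists t, vals s xs = Some t /\ interp M r t
  | ONRel r xs => exists t, vals s xs = Some t /\ ~ interp M r t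
  | OAnd a b => fo_sat M s a /\ fo_sat M s b
  | OOr a b => fo_sat M s a \/ fo_sat M s b
  | OEx v a => exists m : M, fo_sat M (update s v m) a
  | OAll v a => forall m : M, fo_sat M (update s v m) a
  end.

(* Lax team semantics. *)
Fixpoint tsat {L C} (M : structure L) (φ : formula L C) (X : team M) : Prop :=
  match φ with
  | FEq x y => forall s, X s -> exists a, s x = Some a /\ s y = Some a
  | FNeq x y => forall s, X s -> exists a b, s x = Some a /\ s y = Some b /\ a <> b
  | FRel r xs => forall s, X s -> exists t, vals s xs = Some t /\ interp M r t
  | FNRel r xs => forall s, X s -> exists t, vals s xs = Some t /\ ~ interp M r t
  | FDep i xs => dn_holds (dc_notion C i) (dom M) (team_rel X xs)
  | FAnd a b => tsat M a X /\ tsat M b X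
  | FOr a b => exists Y Z : team M,
      (forall s, X s <-> (Y s \/ Z s)) /\ tsat M a Y /\ tsat M b Z
  | FCor a b => tsat M a X \/ tsat M b X
  | FEx v a => exists F : assignment M -> M -> Prop,
      (forall s, X s -> exists m, F s m) /\
      tsat M a (fun s' => exists s m, X s /\ F s m /\ s' = update s v m)
  | FAll v a =>
      tsat M a (fun s' => exists s (m : M), X s /\ s' = update s v m)
  end.

Definition strongly_first_order (C : dep_class) : Prop :=
  forall (L : signature) (φ : formula L C),
    no_cor φ -> sentence φ ->
    exists φ' : fo L, fo_sentence φ' /\
      forall M : structure L, tsat M φ (empty_team M) <-> fo_sat M (empty_asg M) φ'.

(* Main.v *)
Require Import Defs.
From Stdlib Require Import List.
Import ListNotations.

Definition pairs {A} (f : A -> A -> A) (l1 l2 : list A) : list A :=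
  flat_map (fun x => map (f x) l2) l1.

Lemma in_pairs {A} (f : A -> A -> A) l1 l2 z :
  In z (pairs f l1 l2) <-> exists x y, In x l1 /\ In y l2 /\ z = f x y.
Proof.
  unfold pairs; rewrite in_flat_map; split.
  - intros [x [Hx Hz]]; apply in_map_iff in Hz; destruct Hz as [y [<- Hy]]; eauto.
  - intros [x [y [Hx [Hy ->]]]]; exists x; split; auto; apply in_map; auto.
Qed.

Fixpoint nf {L C} (φ : formula L C) : list (formula L C) :=
  match φ with
  | FAnd a b => pairs FAnd (nf a) (nf b)
  | FOr a b => pairs FOr (nf a) (nf b)
  | FCor a b => nf a ++ nf b
  | FEx v a => map (FEx v) (nf a)
  | FAll v a => map (FAll v) (nf a)
  | _ => [φ]
  end.

Lemma incl_filter {A} (f : A -> bool) l1 l2 : incl l1 l2 -> incl (filter f l1) (filter f l2).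
Proof.
  intros H x Hx; apply filter_In in Hx; apply filter_In; intuition.
Qed.

Lemma nf_syn {L C} (φ : formula L C) :
  forall ψ, In ψ (nf φ) -> no_cor ψ /\ incl (fv ψ) (fv φ) /\ (dep_wf φ -> dep_wf ψ).
Proof.
  induction φ; simpl; intros ψ Hψ;
  try (destruct Hψ as [<- | []]; simpl; repeat split; auto; apply incl_refl).
  - apply in_pairs in Hψ; destruct Hψ as [x [y [Hx [Hy ->]]]].
    destruct (IHφ1 _ Hx) as [? [? ?]]; destruct (IHφ2 _ Hy) as [? [? ?]].
    simpl; repeat split; auto; [apply incl_app_app; auto| tauto | tauto].
  - apply in_pairs in Hψ; destruct Hψ as [x [y [Hx [Hy ->]]]].
    destruct (IHφ1 _ Hx) as [? [? ?]]; destruct (IHφ2 _ Hy) as [? [? ?]].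
    simpl; repeat split; auto; [apply incl_app_app; auto| tauto | tauto].
  - apply in_app_or in Hψ; destruct Hψ as [H|H].
    + destruct (IHφ1 _ H) as [? [? ?]]; repeat split; auto;
      [apply incl_appl; auto | tauto].
    + destruct (IHφ2 _ H) as [? [? ?]]; repeat split; auto;
      [apply incl_appr; auto | tauto].
  - apply in_map_iff in Hψ; destruct Hψ as [x [<- Hx]].
    destruct (IHφ _ Hx) as [? [? ?]]; simpl; repeat split; auto; apply incl_filter; auto.
  - apply in_map_iff in Hψ; destruct Hψ as [x [<- Hx]].
    destruct (IHφ _ Hx) as [? [? ?]]; simpl; repeat split; auto; apply incl_filter; auto.
Qed.

Lemma nf_sem {L C} (M : structure L) (φ : formula L C) :
  forall X, tsat M φ X <-> exists ψ, In ψ (nf φ) /\ tsat M ψ X.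
Proof.
  induction φ; simpl; intros X;
  try (split; [intros H; eexists; split; [left; reflexivity | exact H]
              | intros [ψ [[<- | []] H]]; exact H]).
  - rewrite IHφ1, IHφ2; split.
    + intros [[x [Hx Ha]] [y [Hy Hb]]]; exists (FAnd x y); split;
      [apply in_pairs; eauto | simpl; auto].
    + intros [ψ [Hψ H]]; apply in_pairs in Hψ; destruct Hψ as [x [y [Hx [Hy ->]]]];
      simpl in H; destruct H; split; eauto.
  - split.
    + intros [Y [Z [HX [Ha Hb]]]]; apply IHφ1 in Ha; apply IHφ2 in Hb;
      destruct Ha as [x [Hx Ha]]; destruct Hb as [y [Hy Hb]];
      exists (FOr x y); split; [apply in_pairs; eauto | simpl; eauto].
    + intros [ψ [Hψ H]]; apply in_pairs in Hψ; destruct Hψ as [x [y [Hx [Hy ->]]]];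
      simpl in H; destruct H as [Y [Z [HX [Ha Hb]]]]; exists Y, Z; split; auto;
      split; [apply IHφ1 | apply IHφ2]; eauto.
  - rewrite IHφ1, IHφ2; split.
    + intros [[x [Hx H]]|[x [Hx H]]]; exists x; split; auto; apply in_or_app; auto.
    + intros [x [Hx H]]; apply in_app_or in Hx; destruct Hx; [left|right]; eauto.
  - split.
    + intros [F [HF H]]; apply IHφ in H; destruct H as [x [Hx H]];
      exists (FEx n x); split; [apply in_map; auto | simpl; eauto].
    + intros [ψ [Hψ H]]; apply in_map_iff in Hψ; destruct Hψ as [x [<- Hx]];
      simpl in H; destruct H as [F [HF H]]; exists F; split; auto; apply IHφ; eauto.
  - rewrite IHφ; split.
    + intros [x [Hx H]]; exists (FAll n x); split; [apply in_map; auto | simpl; auto].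
    + intros [ψ [Hψ H]]; apply in_map_iff in Hψ; destruct Hψ as [x [<- Hx]]; eauto.
Qed.

Lemma combine_list (C : dep_class) (L : signature) :
  strongly_first_order C ->
  forall l : list (formula L C), (forall ψ, In ψ l -> no_cor ψ /\ sentence ψ) ->
  exists φ' : fo L, fo_sentence φ' /\
    forall M : structure L, (exists ψ, In ψ l /\ tsat M ψ (empty_team M))
                            <-> fo_sat M (empty_asg M) φ'.
Proof.
  intros HS l; induction l as [|a l IH]; intros Hl.
  - exists (OAll 0 (ONeq 0 0)); split; [reflexivity|].
    intros M; split; [intros [_ [[] _]]|].
    intros H; exfalso; destruct (dom_inhabited _ M) as [m]; specialize (H m).
    destruct H as [x [y [H1 [H2 H3]]]]; unfold update in *; simpl in *.
    congruence.
  - destruct (Hl a (or_introl eq_refl)) as [Ha1 Ha2].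
    destruct (HS L a Ha1 Ha2) as [a' [Ha' Hsa]].
    destruct IH as [r' [Hr' Hsr]]; [intros; apply Hl; right; auto|].
    exists (OOr a' r'); split.
    + unfold fo_sentence in *; simpl; rewrite Ha', Hr'; reflexivity.
    + intros M; simpl; rewrite <- Hsa, <- Hsr; split.
      * intros [ψ [[<-|H] Ht]]; [left; auto | right; eauto].
      * intros [H|[ψ [H1 H2]]]; [exists a; auto | exists ψ; auto].
Qed.

Theorem mainTheorem19 (C : dep_class) :
  strongly_first_order C ->
  forall (L : signature) (φ : formula L C),
    sentence φ ->
    exists φ' : fo L, fo_sentence φ' /\
      forall M : structure L, tsat M φ (empty_team M) <-> fo_sat M (empty_asg M) φ'.
Proof.
  intros HS L φ [Hfv Hwf].
  destruct (combine_list C L HS (nf φ)) as [φ' [H1 H2]].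
  - intros ψ Hψ; destruct (nf_syn φ ψ Hψ) as [Hn [Hi Hd]]; repeat split; auto.
    rewrite Hfv in Hi; apply incl_l_nil; auto.
  - exists φ'; split; auto; intros M; rewrite nf_sem; apply H2.
Qed.
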